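(* There is a first-order formula $\Psi_{\mathrm{tran}}(x,y)$ in the language $\{\le,[1]+[1]\}$ such that for all $\sigma,\pi\in\mathcal P$, $$\mathbf Y^*\models\Psi_{\mathrm{tran}}(\sigma,\pi)\iff \pi=[\#\sigma].$$
   Context: $\mathcal P$ is the set of all integer partitions, including the empty partition $\emptyset$; a partition is a nonincreasing finite sequence of positive integers (its parts). $[n]$ denotes the partition with a single part $n$ (with $[0]=\emptyset$), and $m[n]$ the partition with exactly $m$ parts equal to $n$. Every nonempty partition has a unique canonical representation $\sigma=\sum_{i=1}^k m_i[n_i]$ with $n_1>\dots>n_k\ge1$, meaning part $n_i$ occurs exactly $m_i\ge1$ times. Let $p_1=2,p_2=3,p_3=5,\dots$ enumerate the primes. Define $\#:\mathcal P\to\mathbb N$ by $\#\emptyset=0$; $\#(m[1])=p_1^{m-1}$ for $m\ge1$; and $\#\sigma=\prod_{i=1}^k p_{n_i}^{m_i}$ if $\sigma=\sum_{i=1}^k m_i[n_i]$ has some part $n_i\ne1$. (This is a bijection.) Young's lattice $\mathbf Y=\langle\mathcal P,\le\rangle$ has $(s_1,\dots,s_r)\le(n_1,\dots,n_t)$ iff $r\le t$ and $s_i\le n_i$ for all $i\le r$; $\mathbf Y^*$ is $\mathbf Y$ with a constant symbol interpreted as the partition $[1]+[1]=(1,1)$. *)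

(* Defs.v *)
From mathcomp Require Import all_boot.
Set Implicit Arguments. Unset Strict Implicit. Unset Printing Implicit Defensive.

Definition is_partition (s : seq nat) : bool :=
  sorted geq s && all (fun x => 0 < x) s.

Record ipartition := IPartition { parts :> seq nat; partsP : is_partition parts }.

Definition young_le (s t : seq nat) : bool :=
  (size s <= size t) && all (fun i => nth 0 s i <= nth 0 t i) (iota 0 (size s)).

(* The constant of Y*: the ipartition [1]+[1] = (1,1). *)
Definition one_one : ipartition.
Proof. by exists [:: 1; 1]. Defined.

(* [n] : single part n, with [0] = empty ipartition (as a sequence). *)
Definition single (n : nat) : seq nat := if n is 0 then [::] else [:: n].

Definition next_prime (m : nat) : nat :=
  ex_minn (P := fun p => (m < p) && prime p)
    (let: exist2 p Hp1 Hp2 := prime_above m in ex_intro _ p (introT andP (conj Hp1 Hp2))).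

(* nth_prime n = p_n for n >= 1 (nth_prime 0 = 1 is a dummy value). *)
Fixpoint nth_prime (n : nat) : nat :=
  if n is k.+1 then next_prime (nth_prime k) else 1.

(* #emptyset = 0; #(m[1]) = 2^(m-1); otherwise prod_i p_{n_i}^{m_i},
   i.e. the product of p_x over all parts x (with multiplicity). *)
Definition hash (s : seq nat) : nat :=
  if s is [::] then 0
  else if all (fun x => x == 1) s then 2 ^ (size s).-1
  else \prod_(x <- s) nth_prime x.

Inductive term : Type :=
| TVar : nat -> term
| TConst : term.

Inductive formula : Type :=
| FLe : term -> term -> formula
| FEq : term -> term -> formula
| FFalse : formula
| FNot : formula -> formula
| FAnd : formula -> formula -> formula
| FOr : formula -> formula -> formula
| FImp : formula -> formula -> formula
| FForall : nat -> formula -> formula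
| FExists : nat -> formula -> formula.

Definition env := nat -> ipartition.

Definition update (e : env) (i : nat) (a : ipartition) : env :=
  fun j => if j == i then a else e j.

Definition eval_term (e : env) (t : term) : ipartition :=
  match t with TVar i => e i | TConst => one_one end.

Fixpoint sat (e : env) (f : formula) : Prop :=
  match f with
  | FLe t1 t2 => young_le (eval_term e t1) (eval_term e t2)
  | FEq t1 t2 => eval_term e t1 = eval_term e t2
  | FFalse => False
  | FNot g => ~ sat e g
  | FAnd g h => sat e g /\ sat e h
  | FOr g h => sat e g \/ sat e h
  | FImp g h => sat e g -> sat e h
  | FForall i g => forall a : ipartition, sat (update e i a) g
  | FExists i g => exists a : ipartition, sat (update e i a) g
  end.

(* Main.v *)
Require Import Defs.
From mathcomp Require Import all_boot zify.
Set Implicit Arguments. Unset Strict Implicit.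


Definition pt (x : ipartition) i := nth 0 (parts x) i.

Lemma pt_pos (x : ipartition) i : (0 < pt x i) = (i < size x).
Proof.
case: x => s Hs0; rewrite /pt /=; case/andP: (Hs0) => _ /allP Hp.
case: (ltnP i (size s)) => Hi; last by rewrite nth_default.
by apply: Hp; rewrite mem_nth.
Qed.

Lemma pt_mono (x : ipartition) i j : i <= j -> pt x j <= pt x i.
Proof.
case: x => s Hs0; rewrite /pt /= => Hij; case/andP: (Hs0) => Hs _.
case: (ltnP j (size s)) => Hj; last by rewrite nth_default.
have Htr : transitive (T:=nat) geq by move=> a b c /= H1 H2; apply: leq_trans H2 H1.
have := sorted_leq_nth Htr (fun a => leqnn a) 0 Hs; apply; rewrite ?inE //=; lia.
Qed.

Lemma le_ptP (x y : ipartition) : young_le x y <-> forall i, pt x i <= pt y i.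
Proof.
rewrite /young_le; split.
- move=> /andP [Hsz /allP H] i.
  case: (ltnP i (size x)) => Hi; first by apply: H; rewrite mem_iota.
  by rewrite /pt nth_default.
- move=> H; apply/andP; split.
  + case: (ltnP (size y) (size x)) => // Hlt.
    have := H (size x).-1. have := pt_pos x (size x).-1. have := pt_pos y (size x).-1.
    have -> : (size x).-1 < size x by lia.
    have -> : (size x).-1 < size y = false by lia. lia.
  + by apply/allP => i _; apply: H.
Qed.

Lemma pt_ext (x y : ipartition) : (forall i, pt x i = pt y i) -> parts x = parts y.
Proof.
move=> H.
have Hs : size x = size y.
  apply/eqP; rewrite eqn_leq; apply/andP; split.
  - case: (ltnP (size y) (size x)) => // Hlt.
    have := pt_pos x (size y); have := pt_pos y (size y); rewrite H ltnn Hlt. by move=> ->.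
  - case: (ltnP (size x) (size y)) => // Hlt.
    have := pt_pos x (size x); have := pt_pos y (size x); rewrite H ltnn Hlt. by move=> ->.
by apply: (eq_from_nth (x0 := 0) Hs) => i _; apply: H.
Qed.

Lemma mkP (g : nat -> nat) L :
  (forall i, i < L -> 0 < g i) -> (forall i, L <= i -> g i = 0) ->
  (forall i, g i.+1 <= g i) -> exists x : ipartition, forall i, pt x i = g i.
Proof.
move=> Hpos Hz Hmono.
have Hp : is_partition (mkseq g L).
  apply/andP; split.
  - apply/(sortedP 0) => i; rewrite size_mkseq => Hi.
    by rewrite !nth_mkseq //; [apply: Hmono | lia].
  - apply/allP => y /mapP [i]; rewrite mem_iota => /andP [_ Hi] ->; apply: Hpos; lia.
exists (IPartition Hp) => i; rewrite /pt /=.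
case: (ltnP i L) => Hi; first by rewrite nth_mkseq.
by rewrite nth_default ?size_mkseq // Hz.
Qed.


Arguments update : simpl never.
Arguments young_le : simpl never.
Lemma upd_eq (e : env) i a : update e i a i = a.
Proof. by rewrite /update eqxx. Qed.
Lemma upd_ne (e : env) i a j : j != i -> update e i a j = e j.
Proof. by rewrite /update => /negPf ->. Qed.
Ltac upd := repeat (rewrite upd_eq || (rewrite upd_ne; last by apply/eqP; lia)).
Ltac updin H := repeat (rewrite upd_eq in H || (rewrite upd_ne in H; last by apply/eqP; lia)).

Lemma pt_c i : pt one_one i = (i < 2).
Proof. by case: i => [|[|i]]; rewrite /pt /one_one /= ?nth_nil. Qed.

Lemma rowW n : exists x : ipartition, forall i, pt x i = if i == 0 then n else 0.
Proof.
apply: (@mkP (fun i => if i == 0 then n else 0) (n > 0)) => i; case: i => //=; lia.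
Qed.
Lemma colW k : exists x : ipartition, forall i, pt x i = (i < k).
Proof. apply: (@mkP (fun i => i < k) k) => i; lia. Qed.

Lemma pt_row (x : ipartition) i : pt x 1 = 0 -> 0 < i -> pt x i = 0.
Proof. move=> H Hi; have := pt_mono x Hi; lia. Qed.
Lemma pt_col (x : ipartition) i : pt x 0 <= 1 -> pt x i = (i < size x).
Proof. move=> H; have := pt_mono x (leq0n i); have := pt_pos x i; lia. Qed.

Definition fle a b := locked (FLe (TVar a) (TVar b)).
Lemma sat_le e a b : sat e (fle a b) <-> forall i, pt (e a) i <= pt (e b) i.
Proof. rewrite /fle -lock; exact: le_ptP. Qed.

Definition fleC a := locked (FLe (TVar a) TConst).
Lemma sat_leC e a : sat e (fleC a) <-> forall i, pt (e a) i <= (i < 2).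
Proof.
rewrite /fleC -lock /=; change [:: 1; 1] with (parts one_one); rewrite le_ptP.
by split => H i; have := H i; rewrite pt_c.
Qed.

Definition fRow a := locked (FNot (FLe TConst (TVar a))).
Lemma sat_Row e a : sat e (fRow a) <-> pt (e a) 1 = 0.
Proof.
rewrite /fRow -lock /=; change [:: 1; 1] with (parts one_one); rewrite le_ptP; split.
- move=> H; case E: (pt (e a) 1) => [//|k]; exfalso; apply: H => i.
  rewrite pt_c; have := pt_mono (e a) (leq0n 1). case: i => [|[|i]] /=; lia.
- by move=> H0 H; have := H 1; rewrite pt_c H0.
Qed.

Definition fZero a m := locked (FForall m (fle a m)).
Lemma sat_Zero e a m : a < m -> sat e (fZero a m) <-> pt (e a) 0 = 0.
Proof.
move=> Ha; rewrite /fZero -lock /=; split.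
- move=> H; have [y Hy] := colW 0; have := H y; rewrite sat_le; upd => /(_ 0); rewrite Hy; lia.
- move=> H0 y; rewrite sat_le; upd => i; have := pt_mono (e a) (leq0n i); lia.
Qed.

Definition fCol a m := locked (FForall m (FImp (FAnd (fRow m) (fle m a)) (fleC m))).
Lemma sat_Col e a m : a < m -> sat e (fCol a m) <-> pt (e a) 0 <= 1.
Proof.
move=> Ha; rewrite /fCol -lock /=; split.
- move=> H; have [y Hy] := rowW (pt (e a) 0); have := H y; rewrite sat_Row sat_le sat_leC; upd.
  rewrite Hy => /(_ _) /(_ 0); rewrite Hy; apply; split => // i.
  rewrite Hy; case: i => //= i; lia.
- move=> H0 y; rewrite sat_Row sat_le sat_leC; upd => -[H1 H2] i.
  case: i => [|[|i]] /=; first by have := H2 0; lia.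
  + by rewrite H1.
  + by rewrite pt_row.
Qed.



Lemma size_of (x : ipartition) k : (forall i, (0 < pt x i) = (i < k)) -> size x = k.
Proof.
move=> H; have H1 := H (size x); have H2 := H k; rewrite pt_pos in H1; rewrite pt_pos in H2.
apply/eqP; rewrite eqn_leq; apply/andP; split; lia.
Qed.

Lemma le_row (x y : ipartition) : pt x 1 = 0 -> (forall i, pt x i <= pt y i) <-> pt x 0 <= pt y 0.
Proof. move=> H; split => [/(_ 0)//|H0 [|i]//]; by rewrite pt_row. Qed.

Lemma le_row2 (x y : ipartition) : pt y 1 = 0 -> (forall i, pt x i <= pt y i) -> pt x 1 = 0 /\ pt x 0 <= pt y 0.
Proof. move=> Hy H; split; last exact: H. by have := H 1; rewrite Hy; lia. Qed.

Lemma le_col (x y : ipartition) : pt x 0 <= 1 -> (forall i, pt x i <= pt y i) <-> size x <= size y.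
Proof.
move=> H; split.
- move=> Hl; case: (ltnP (size y) (size x)) => // Hlt.
  have := Hl (size x).-1; rewrite (pt_col _ H); have := pt_pos y (size x).-1; lia.
- move=> Hs i; rewrite (pt_col _ H); have := pt_pos y i; lia.
Qed.

Lemma le_col2 (x y : ipartition) : pt y 0 <= 1 -> (forall i, pt x i <= pt y i) -> pt x 0 <= 1 /\ size x <= size y.
Proof.
move=> Hy H; have Hx : pt x 0 <= 1 by have := H 0; lia.
by split => //; apply/le_col.
Qed.

Definition fSuccR a b m := locked (FAnd (fRow a) (FAnd (fRow b) (FAnd (fle a b) (FAnd (FNot (fle b a))
   (FForall m (FImp (fle m b) (FImp (FNot (fle m a)) (fle b m)))))))).
Lemma sat_SuccR e a b m : a < m -> b < m ->
  sat e (fSuccR a b m) <-> [/\ pt (e a) 1 = 0, pt (e b) 1 = 0 & pt (e b) 0 = (pt (e a) 0).+1].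
Proof.
move=> Ha Hb; rewrite /fSuccR -lock /= !sat_Row !sat_le; split.
- move=> [Ra [Rb [Hab [Hba H]]]]; rewrite (le_row _ Ra) in Hab; rewrite (le_row _ Rb) in Hba.
  have [y Hy] := rowW (pt (e a) 0).+1; have Ry : pt y 1 = 0 by rewrite Hy.
  have := H y; rewrite !sat_le; upd.
  rewrite !(le_row _ Ry) (le_row _ Rb) Hy /= => H'.
  split => //; have : pt (e b) 0 <= (pt (e a) 0).+1 by apply: H'; lia.
  lia.
- move=> [Ra Rb Hs]; rewrite (le_row _ Ra) (le_row _ Rb); split => //; split => //; split; first lia.
  split; first lia.
  move=> y; rewrite !sat_le; upd => Hyb; have [Ry Hy0] := le_row2 Rb Hyb.
  rewrite (le_row _ Ry) (le_row _ Rb) => Hya; lia.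
Qed.

Definition fSuccC a b m := locked (FAnd (fCol a m) (FAnd (fCol b m) (FAnd (fle a b) (FAnd (FNot (fle b a))
   (FForall m (FImp (fle m b) (FImp (FNot (fle m a)) (fle b m)))))))).
Lemma sat_SuccC e a b m : a < m -> b < m ->
  sat e (fSuccC a b m) <-> [/\ pt (e a) 0 <= 1, pt (e b) 0 <= 1 & size (e b) = (size (e a)).+1].
Proof.
move=> Ha Hb; rewrite /fSuccC -lock /= !sat_Col // !sat_le; split.
- move=> [Ca [Cb [Hab [Hba H]]]]; rewrite (le_col _ Ca) in Hab; rewrite (le_col _ Cb) in Hba.
  have [y Hy] := colW (size (e a)).+1.
  have Cy : pt y 0 <= 1 by rewrite Hy.
  have Sy : size y = (size (e a)).+1 by apply: size_of => i; rewrite Hy; lia.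
  have := H y; rewrite !sat_le; upd.
  rewrite (le_col _ Cb) !(le_col _ Cy) Sy => H'.
  split => //; have : size (e b) <= (size (e a)).+1 by apply: H'; lia.
  lia.
- move=> [Ca Cb Hs]; rewrite (le_col _ Ca) (le_col _ Cb); split => //; split => //; split; first lia.
  split; first lia.
  move=> y; rewrite !sat_le; upd => Hyb; have [Cy Hy0] := le_col2 Cb Hyb.
  rewrite (le_col _ Cy) (le_col _ Cb) => Hya; lia.
Qed.

Definition fFirst x r m := locked (FAnd (fRow r) (FAnd (fle r x)
   (FForall m (FImp (fRow m) (FImp (fle m x) (fle m r)))))).
Lemma sat_First e x r m : x < m -> r < m ->
  sat e (fFirst x r m) <-> pt (e r) 1 = 0 /\ pt (e r) 0 = pt (e x) 0.
Proof.
move=> Hx Hr; rewrite /fFirst -lock /= !sat_Row !sat_le; split.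
- move=> [Rr [Hrx H]]; rewrite (le_row _ Rr) in Hrx.
  have [y Hy] := rowW (pt (e x) 0).
  have Ry : pt y 1 = 0 by rewrite Hy.
  have Hy0 : pt y 0 = pt (e x) 0 by rewrite Hy.
  have := H y; rewrite !sat_Row !sat_le; upd; rewrite !(le_row _ Ry) Hy0 => H'.
  split => //; have := H' Ry (leqnn _); lia.
- move=> [Rr Hs]; rewrite (le_row _ Rr) Hs; split => //; split => // y.
  rewrite !sat_Row !sat_le; upd => Ry; rewrite !(le_row _ Ry); lia.
Qed.

Definition fLen x c m := locked (FAnd (fCol c m) (FAnd (fle c x)
   (FForall m (FImp (fCol m m.+1) (FImp (fle m x) (fle m c)))))).
Lemma sat_Len e x c m : x < m -> c < m ->
  sat e (fLen x c m) <-> pt (e c) 0 <= 1 /\ size (e c) = size (e x).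
Proof.
move=> Hx Hc; rewrite /fLen -lock /= !sat_Col // !sat_le; split.
- move=> [Cc [Hcx H]]; rewrite (le_col _ Cc) in Hcx.
  have [y Hy] := colW (size (e x)).
  have Cy : pt y 0 <= 1 by rewrite Hy; lia.
  have Sy : size y = size (e x) by apply: size_of => i; rewrite Hy; lia.
  have := H y; rewrite !sat_Col // !sat_le; upd; rewrite !(le_col _ Cy) Sy => H'.
  split => //; have := H' Cy (leqnn _); lia.
- move=> [Cc Hs]; rewrite (le_col _ Cc) Hs; split => //; split => // y.
  rewrite !sat_Col // !sat_le; upd => Cy; rewrite !(le_col _ Cy); lia.
Qed.


#[export] Hint Extern 0 (is_true (_ < _)) => (by lia) : core.

Definition fBelow z r c m := locked (FAnd
  (FForall m (FImp (fRow m) (FImp (fle m z) (fle m r))))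
  (FForall m (FImp (fCol m m.+1) (FImp (fle m z) (fle m c))))).
Lemma sat_Below (e : env) z r c m : z < m -> r < m -> c < m ->
  sat e (fBelow z r c m) <-> pt (e z) 0 <= pt (e r) 0 /\ size (e z) <= size (e c).
Proof.
move=> Hz Hr Hc; rewrite /fBelow -lock /=; split.
- move=> [H1 H2]; split.
  + have [y Hy] := rowW (pt (e z) 0).
    have Ry : pt y 1 = 0 by rewrite Hy.
    have Hy0 : pt y 0 = pt (e z) 0 by rewrite Hy.
    have := H1 y; rewrite !sat_Row !sat_le; upd; rewrite !(le_row _ Ry) Hy0; move=> H'.
    exact: H' Ry (leqnn _).
  + have [y Hy] := colW (size (e z)).
    have Cy : pt y 0 <= 1 by rewrite Hy; lia.
    have Sy : size y = size (e z) by apply: size_of => i; rewrite Hy; lia.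
    have := H2 y; rewrite !sat_Col // !sat_le; upd; rewrite !(le_col _ Cy) Sy => H'.
    exact: H' Cy (leqnn _).
- move=> [H1 H2]; split => y.
  + rewrite !sat_Row !sat_le; upd => Ry; rewrite !(le_row _ Ry); lia.
  + rewrite !sat_Col // !sat_le; upd => Cy; rewrite !(le_col _ Cy); lia.
Qed.

Lemma rectW n k : exists x : ipartition, forall i, pt x i = if i < k then n else 0.
Proof.
apply: (@mkP (fun i => if i < k then n else 0) (if n == 0 then 0 else k)) => i.
- case: (n =P 0) => [->//|/eqP]; case: ifP => //; lia.
- case: (n =P 0) => [->|_]; [by case: ifP | by move=> H; rewrite ltnNge H].
- case: ifP; case: ifP => //; lia.
Qed.

Definition fGE x c r m := locked (FForall m (FImp (fBelow m r c m.+1) (fle m x))).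
Lemma sat_GE (e : env) x c r m : x < m -> r < m -> c < m ->
  sat e (fGE x c r m) <-> forall i, i < size (e c) -> pt (e r) 0 <= pt (e x) i.
Proof.
move=> Hx Hr Hc; rewrite /fGE -lock /=; split.
- move=> H i Hi; have [z Hz] := rectW (pt (e r) 0) (size (e c)).
  have := H z; rewrite sat_Below // sat_le; upd => H'.
  have := H' _ i; rewrite !Hz Hi; apply; split.
  + by case: ifP.
  + case: (ltnP (size (e c)) (size z)) => // Hlt.
    have := pt_pos z (size z).-1; rewrite Hz; have -> : (size z).-1 < size z by lia.
    have -> : (size z).-1 < size (e c) = false by lia. by [].
- move=> H z; rewrite sat_Below // sat_le; upd => -[H1 H2] i.
  case: (ltnP i (size z)) => Hi.
  + have := pt_mono z (leq0n i); have := H i; lia.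
  + by rewrite /pt nth_default.
Qed.

Lemma ge_last (x : ipartition) k n : 0 < k -> (forall i, i < k -> n <= pt x i) <-> n <= pt x k.-1.
Proof.
move=> Hk; split => [H|H i Hi]; first by apply: H; lia.
have : i <= k.-1 by lia. move/(pt_mono x); lia.
Qed.

Definition fPart x c r m := locked (FAnd (fRow r) (FAnd (fGE x c r m)
  (FForall m (FImp (fSuccR r m m.+1) (FNot (fGE x c m m.+1)))))).
Lemma sat_Part (e : env) x c r m : x < m -> r < m -> c < m -> 0 < size (e c) ->
  sat e (fPart x c r m) <-> pt (e r) 1 = 0 /\ pt (e x) (size (e c)).-1 = pt (e r) 0.
Proof.
move=> Hx Hr Hc Hk; rewrite /fPart -lock /= sat_Row sat_GE // ge_last //; split.
- move=> [Rr [H1 H2]]; split => //.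
  have [y Hy] := rowW (pt (e r) 0).+1.
  have := H2 y; rewrite sat_SuccR // sat_GE //; upd; rewrite ge_last // !Hy /= => H'.
  suff : ~ (pt (e r) 0).+1 <= pt (e x) (size (e c)).-1 by lia.
  by apply: H'; split.
- move=> [Rr Heq]; split => //; split; first lia.
  move=> y; rewrite sat_SuccR // sat_GE //; upd; rewrite ge_last // => -[_ _ ->]; lia.
Qed.

Definition fIff f g := FAnd (FImp f g) (FImp g f).

Definition fStair x m := locked (FForall m (FForall m.+1 (FForall m.+2 (FForall m.+3
  (FImp (fSuccC m m.+1 m.+4) (FImp (FNot (fZero m m.+4)) (FImp (fSuccR m.+2 m.+3 m.+4)
   (FImp (FNot (fZero m.+2 m.+4)) (fIff (fGE x m.+1 m.+2 m.+4) (fGE x m m.+3 m.+4)))))))))).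
Lemma sat_Stair (e : env) x m : x < m -> sat e (fStair x m) <-> forall i, pt (e x) i = pt (e x) 0 - i.
Proof.
move=> Hx; rewrite /fStair -lock /=; split.
- move=> H.
  have Hs : forall j, pt (e x) j.+1 = pt (e x) j - 1.
    move=> j.
    have Hn : forall n, 0 < n -> (n <= pt (e x) j.+1 <-> n.+1 <= pt (e x) j).
      move=> n Hn.
      have [c Hc] := colW j.+1. have [c' Hc'] := colW j.+2.
      have [r Hr] := rowW n. have [r' Hr'] := rowW n.+1.
      have Sc : size c = j.+1 by apply: size_of => i; rewrite Hc; lia.
      have Sc' : size c' = j.+2 by apply: size_of => i; rewrite Hc'; lia.
      have := H c c' r r'; rewrite sat_SuccC // sat_SuccR // !sat_Zero // !sat_GE //; upd.
      rewrite !ge_last ?Sc ?Sc' // !Hc !Hc' !Hr !Hr' /=.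
      move=> H'; have Hn0 : n <> 0 by lia.
      have [A B] := H' (And3 isT isT erefl) ltac:(done) (And3 erefl erefl erefl) Hn0.
      by split.
    case E: (pt (e x) j.+1) => [|u].
    + case E2: (pt (e x) j) => [|[|w]] //.
      have := Hn w.+1 isT; rewrite E E2; lia.
    + have [A _] := Hn u.+1 isT; rewrite E in A; have H1 := A (leqnn _).
      have [_ B] := Hn (pt (e x) j).-1 ltac:(lia). rewrite E in B.
      have := B ltac:(lia). lia.
  elim=> [|i IH]; first by rewrite subn0.
  by rewrite Hs IH; lia.
- move=> H c c' r r'; rewrite sat_SuccC // sat_SuccR // !sat_Zero // !sat_GE //; upd.
  move=> [Cc Cc' Sc] Zc [Rr Rr' Sr] Zr.
  have Hk : 0 < size c by have := pt_pos c 0; lia.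
  rewrite !ge_last ?Sc //=; have H1 := H (size c); have H2 := H (size c).-1; rewrite Sr; lia.
Qed.

Lemma stairW n : exists x : ipartition, forall i, pt x i = n - i.
Proof. apply: (@mkP (fun i => n - i) n) => i; lia. Qed.

Definition fEqLen r c m := locked (FExists m (FAnd (fStair m m.+1) (FAnd (fFirst m r m.+1) (fLen m c m.+1)))).
Lemma sat_EqLen (e : env) r c m : r < m -> c < m ->
  sat e (fEqLen r c m) <-> [/\ pt (e r) 1 = 0, pt (e c) 0 <= 1 & size (e c) = pt (e r) 0].
Proof.
move=> Hr Hc; rewrite /fEqLen -lock /=; split.
- move=> [x]; rewrite sat_Stair // sat_First // sat_Len //; upd.
  move=> [Hs [[Rr Hf] [Cc Sc]]]; split => //; rewrite Sc Hf.
  apply: size_of => i; rewrite Hs; lia.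
- move=> [Rr Cc Sc]; have [x Hx] := stairW (pt (e r) 0); exists x.
  rewrite sat_Stair // sat_First // sat_Len //; upd.
  have Sx : size x = pt (e r) 0 by apply: size_of => i; rewrite Hx; lia.
  split; first by move=> i; rewrite !Hx; lia.
  by rewrite Hx Sx subn0.
Qed.


Notation "n .+5" := (n.+4.+1) (at level 1, left associativity, format "n .+5") : nat_scope.
Notation "n .+6" := (n.+5.+1) (at level 1, left associativity, format "n .+6") : nat_scope.
Notation "n .+7" := (n.+6.+1) (at level 1, left associativity, format "n .+7") : nat_scope.
Notation "n .+8" := (n.+7.+1) (at level 1, left associativity, format "n .+8") : nat_scope.

Definition fAdd a b c m := locked (FAnd (fRow a) (FAnd (fle b c)
  (FExists m (FExists m.+1 (FExists m.+2 (FAnd (fStair m m.+3) (FAnd (fFirst m c m.+3)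
    (FAnd (fEqLen b m.+1 m.+3) (FAnd (fSuccC m.+1 m.+2 m.+3) (fPart m m.+2 a m.+3)))))))))).
Lemma sat_Add (e : env) a b c m : a < m -> b < m -> c < m ->
  sat e (fAdd a b c m) <-> [/\ pt (e a) 1 = 0, pt (e b) 1 = 0, pt (e c) 1 = 0 & pt (e c) 0 = pt (e a) 0 + pt (e b) 0].
Proof.
move=> Ha Hb Hc; rewrite /fAdd -lock /= sat_Row sat_le; split.
- move=> [Ra [Hbc [x [C [C']]]]].
  rewrite sat_Stair // sat_First // sat_EqLen // sat_SuccC //; upd.
  move=> [Hs [[Rc Hf] [[Rb CC SC] [[_ CC' SC'] HP]]]].
  rewrite sat_Part // in HP; last by upd; rewrite SC'.
  updin HP; move: HP => [Ra' HP]; rewrite SC' SC /= Hs -Hf in HP.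
  rewrite (le_row _ Rb) in Hbc; split => //; lia.
- move=> [Ra Rb Rc Hs]; rewrite (le_row _ Rb); split => //; split; first lia.
  have [x Hx] := stairW (pt (e c) 0). have [C HC] := colW (pt (e b) 0).
  have [C' HC'] := colW (pt (e b) 0).+1.
  have SC : size C = pt (e b) 0 by apply: size_of => i; rewrite HC; lia.
  have SC' : size C' = (pt (e b) 0).+1 by apply: size_of => i; rewrite HC'; lia.
  exists x, C, C'; rewrite sat_Stair // sat_First // sat_EqLen // sat_SuccC //; upd.
  rewrite sat_Part //; upd; last by rewrite SC'.
  split; first by move=> i; rewrite !Hx subn0.
  rewrite Hx subn0; split => //.
  split; first by rewrite HC; split => //; lia.
  split; first by rewrite HC HC'; split => //; lia.
  split => //; rewrite SC' Hx /=; lia.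
Qed.

Definition fMul a b c m := locked (FAnd (fRow a) (FAnd (FNot (fZero a m))
  (FExists m (FExists m.+1 (FAnd (fFirst m c m.+2) (FAnd (fLen m m.+1 m.+2) (FAnd (fEqLen b m.+1 m.+2)
   (FForall m.+2 (FForall m.+3 (FForall m.+4 (FForall m.+5
     (FImp (fSuccC m.+2 m.+3 m.+6) (FImp (FNot (fZero m.+2 m.+6)) (FImp (fPart m m.+2 m.+4 m.+6)
      (FImp (fPart m m.+3 m.+5 m.+6) (FImp (FNot (fZero m.+4 m.+6)) (fAdd m.+5 a m.+4 m.+6))))))))))))))))).

Lemma apW a b : 0 < a -> exists x : ipartition, forall i, pt x i = (b - i) * a.
Proof. move=> Ha; apply: (@mkP (fun i => (b - i) * a) b) => i; nia. Qed.

Lemma sat_Mul (e : env) a b c m : a < m -> b < m -> c < m ->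
  sat e (fMul a b c m) <-> [/\ pt (e a) 1 = 0, 0 < pt (e a) 0, pt (e b) 1 = 0, pt (e c) 1 = 0
     & pt (e c) 0 = pt (e a) 0 * pt (e b) 0].
Proof.
move=> Ha Hb Hc; rewrite /fMul -lock /= sat_Row sat_Zero //; split.
- move=> [Ra [Za [x [C]]]].
  rewrite sat_First // sat_Len // sat_EqLen //; upd.
  move=> [[Rc Hf] [[CC SC] [[Rb _ SCb] H]]].
  have AP : forall j, pt x j <> 0 -> pt x j = pt x j.+1 + pt (e a) 0.
    move=> j Hj.
    have [D HD] := colW j.+1. have [D' HD'] := colW j.+2.
    have [R HR] := rowW (pt x j). have [S HS] := rowW (pt x j.+1).
    have SD : size D = j.+1 by apply: size_of => i; rewrite HD; lia.
    have SD' : size D' = j.+2 by apply: size_of => i; rewrite HD'; lia.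
    have := H D D' R S; rewrite sat_SuccC // !sat_Zero // !sat_Part //; upd; rewrite ?SD ?SD' //.
    rewrite sat_Add //; upd; rewrite !HD !HD' !HR !HS /=.
    move=> H'; have [_ _ _ ->] := H' (And3 isT isT erefl) ltac:(done) (conj erefl erefl)
        (conj erefl erefl) Hj.
    lia.
  have Hk : forall k, k <= size x -> pt x (size x - k) = k * pt (e a) 0.
    elim=> [|k IH] Hk; first by rewrite subn0 /pt nth_default.
    have Hj : pt x (size x - k.+1) <> 0 by have := pt_pos x (size x - k.+1); lia.
    rewrite (AP _ Hj); have -> : (size x - k.+1).+1 = size x - k by lia.
    rewrite IH; lia.
  have := Hk (size x) (leqnn _); rewrite subnn -Hf -SC SCb => ->.
  by split => //; lia.
- move=> [Ra Pa Rb Rc Hs]; split => //; split; first lia.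
  have [x Hx] := apW (pt (e b) 0) Pa. have [C HC] := colW (pt (e b) 0).
  have SC : size C = pt (e b) 0 by apply: size_of => i; rewrite HC; lia.
  have Sx : size x = pt (e b) 0 by apply: size_of => i; rewrite Hx; nia.
  exists x, C; rewrite sat_First // sat_Len // sat_EqLen //; upd.
  split; first by rewrite Hx Hs; split => //; lia.
  split; first by rewrite HC SC Sx; split => //; lia.
  split; first by rewrite HC SC; split => //; lia.
  move=> D D' R S; rewrite sat_SuccC // !sat_Zero //; upd => -[CD CD' SD] ZD.
  have PD : 0 < size D by have := pt_pos D 0; lia.
  rewrite !sat_Part //; upd; rewrite ?SD //= => -[RR HR] [RS HS] ZR.
  rewrite sat_Add //; upd; split => //.
  move: HR HS; rewrite !Hx => HR HS. nia.
Qed.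



Definition fPrime p m := locked (FAnd (fRow p) (FAnd (FNot (fCol p m))
  (FForall m (FForall m.+1 (FImp (fMul m m.+1 p m.+2) (FOr (fCol m m.+2) (fCol m.+1 m.+2))))))).
Lemma sat_Prime (e : env) p m : p < m ->
  sat e (fPrime p m) <-> pt (e p) 1 = 0 /\ prime (pt (e p) 0).
Proof.
move=> Hp; rewrite /fPrime -lock /= sat_Row sat_Col //; split.
- move=> [Rp [Cp H]]; split => //; apply/primeP; split; first lia.
  move=> d /dvdnP [k Hk].
  have Pd : 0 < d by move: Hk; case: d => //; lia.
  have [A HA] := rowW d. have [B HB] := rowW k.
  have := H A B; rewrite sat_Mul // !sat_Col //; upd; rewrite !HA !HB /=.
  have E : pt (e p) 0 = d * k by rewrite Hk mulnC.
  move=> /(_ (And5 erefl Pd erefl Rp E)) [H1|H1]; apply/orP; [left | right]; apply/eqP; first lia.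
  have K : k = 1 by move: Hk Cp H1; clear; case: k => [|[|]] //=; lia.
  by rewrite Hk K mul1n.
- move=> [Rp Pp]; have P2 := prime_gt1 Pp; split => //; split; first lia.
  move=> A B; rewrite sat_Mul // !sat_Col //; upd => -[RA PA RB _ Hs].
  have Hdv : pt A 0 %| pt (e p) 0 by rewrite Hs dvdn_mulr.
  case/primeP: Pp => _ Hd; have /orP [/eqP H1|/eqP H1] := Hd _ Hdv; [left; lia | right].
  rewrite H1 in Hs; nia.
Qed.

Lemma next_primeP n : [/\ n < next_prime n, prime (next_prime n) &
   forall p, n < p -> prime p -> next_prime n <= p].
Proof.
rewrite /next_prime; case: ex_minnP => q /andP [H1 H2] H3; split => // p Hp Pp.
by apply: H3; rewrite Hp Pp.
Qed.

Definition fNext p q m := locked (FAnd (fRow p) (FAnd (fPrime q m) (FAnd (fle p q) (FAnd (FNot (fle q p))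
  (FForall m (FImp (fPrime m m.+1) (FImp (fle p m) (FImp (FNot (fle m p)) (fle q m))))))))).
Lemma sat_Next (e : env) p q m : p < m -> q < m ->
  sat e (fNext p q m) <-> [/\ pt (e p) 1 = 0, pt (e q) 1 = 0 & pt (e q) 0 = next_prime (pt (e p) 0)].
Proof.
move=> Hp Hq; rewrite /fNext -lock /= sat_Row sat_Prime // !sat_le; split.
- move=> [Rp [[Rq Pq] [Hpq [Hqp H]]]]; rewrite (le_row _ Rp) in Hpq; rewrite (le_row _ Rq) in Hqp.
  have [H1 H2 H3] := next_primeP (pt (e p) 0).
  have [R HR] := rowW (next_prime (pt (e p) 0)).
  have RR : pt R 1 = 0 by rewrite HR.
  have HR0 : pt R 0 = next_prime (pt (e p) 0) by rewrite HR.
  have := H R; rewrite sat_Prime // !sat_le; upd; rewrite (le_row _ Rp) (le_row _ RR) (le_row _ Rq) HR0.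
  move=> /(_ (conj RR H2) (ltnW H1)) H4; split => //.
  have := H4 ltac:(lia); have := H3 (pt (e q) 0) ltac:(lia) Pq; lia.
- move=> [Rp Rq Hs]; have [H1 H2 H3] := next_primeP (pt (e p) 0).
  rewrite (le_row _ Rp) (le_row _ Rq); split => //; split; first by rewrite Hs.
  split; first lia. split; first lia.
  move=> r; rewrite sat_Prime // !sat_le; upd => -[Rr Pr]; rewrite (le_row _ Rp) (le_row _ Rr) (le_row _ Rq).
  move=> _ Hrp; rewrite Hs; apply: H3 => //; lia.
Qed.

Definition np k := if k == 0 then 0 else nth_prime k.

Lemma np_small : next_prime 0 = 2 /\ next_prime 1 = 2.
Proof.
have [A B C] := next_primeP 0; have [A' B' C'] := next_primeP 1.
have := C 2 isT isT; have := C' 2 isT isT; have := prime_gt1 B; have := prime_gt1 B'; lia.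
Qed.

Lemma np_succ k : np k.+1 = next_prime (np k).
Proof.
case: k => [|k]; rewrite /np //=; have [-> ->] := np_small; done.
Qed.

Lemma np_pos k : 0 < k -> 0 < np k.
Proof.
case: k => // k _; rewrite np_succ; have [A B _] := next_primeP (np k); exact: prime_gt0.
Qed.

Lemma np_mono k : np k <= np k.+1.
Proof. rewrite np_succ; have [A _ _] := next_primeP (np k); lia. Qed.

Lemma nth_prime_prime k : 0 < k -> prime (nth_prime k).
Proof. case: k => // k _ /=; by have [_ B _] := next_primeP (nth_prime k). Qed.

Lemma npW L : exists x : ipartition, forall i, pt x i = np (L - i).
Proof.
apply: (@mkP (fun i => np (L - i)) L) => i.
- move=> Hi; apply: np_pos; lia.
- by move=> Hi; have -> : L - i = 0 by lia.
- case: (ltnP i L) => Hi.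
  + have -> : L - i = (L - i.+1).+1 by lia. exact: np_mono.
  + by have -> : L - i.+1 = 0 by lia.
Qed.

Definition fNth n p m := locked
  (FExists m (FExists m.+1 (FAnd (fLen m m.+1 m.+2) (FAnd (fEqLen n m.+1 m.+2) (FAnd (fFirst m p m.+2)
   (FForall m.+2 (FForall m.+3 (FForall m.+4 (FForall m.+5
     (FImp (fSuccC m.+2 m.+3 m.+6) (FImp (FNot (fZero m.+2 m.+6)) (FImp (fPart m m.+2 m.+4 m.+6)
      (FImp (fPart m m.+3 m.+5 m.+6) (FImp (FNot (fZero m.+4 m.+6)) (fNext m.+5 m.+4 m.+6))))))))))))))).

Lemma sat_Nth (e : env) n p m : n < m -> p < m ->
  sat e (fNth n p m) <-> [/\ pt (e n) 1 = 0, pt (e p) 1 = 0 & pt (e p) 0 = np (pt (e n) 0)].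
Proof.
move=> Hn Hp; rewrite /fNth -lock /=; split.
- move=> [x [C]].
  rewrite sat_First // sat_Len // sat_EqLen //; upd.
  move=> [[CC SC] [[Rn _ SCn] [[Rp Hf] H]]].
  have AP : forall j, pt x j <> 0 -> pt x j = next_prime (pt x j.+1).
    move=> j Hj.
    have [D HD] := colW j.+1. have [D' HD'] := colW j.+2.
    have [R HR] := rowW (pt x j). have [S HS] := rowW (pt x j.+1).
    have SD : size D = j.+1 by apply: size_of => i; rewrite HD; lia.
    have SD' : size D' = j.+2 by apply: size_of => i; rewrite HD'; lia.
    have := H D D' R S; rewrite sat_SuccC // !sat_Zero // !sat_Part //; upd; rewrite ?SD ?SD' //.
    rewrite sat_Next //; upd; rewrite !HD !HD' !HR !HS /=.
    move=> H'; have [_ _ ->] := H' (And3 isT isT erefl) ltac:(done) (conj erefl erefl)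
        (conj erefl erefl) Hj.
    done.
  have Hk : forall k, k <= size x -> pt x (size x - k) = np k.
    elim=> [|k IH] Hk; first by rewrite subn0 /pt nth_default.
    have Hj : pt x (size x - k.+1) <> 0 by have := pt_pos x (size x - k.+1); lia.
    rewrite (AP _ Hj); have -> : (size x - k.+1).+1 = size x - k by lia.
    rewrite IH; [by rewrite np_succ | lia].
  have := Hk (size x) (leqnn _); rewrite subnn -Hf -SC SCn => ->.
  by split.
- move=> [Rn Rp Hs].
  have [x Hx] := npW (pt (e n) 0). have [C HC] := colW (pt (e n) 0).
  have SC : size C = pt (e n) 0 by apply: size_of => i; rewrite HC; lia.
  have Sx : size x = pt (e n) 0.
    apply: size_of => i; rewrite Hx; case: (ltnP i (pt (e n) 0)) => Hi.
    + by rewrite np_pos //; lia.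
    + by have -> : pt (e n) 0 - i = 0 by lia.
  exists x, C; rewrite sat_First // sat_Len // sat_EqLen //; upd.
  split; first by rewrite HC SC Sx; split => //; lia.
  split; first by rewrite HC SC; split => //; lia.
  split; first by rewrite Hx Hs subn0; split.
  move=> D D' R S; rewrite sat_SuccC // !sat_Zero //; upd => -[CD CD' SD] ZD.
  have PD : 0 < size D by have := pt_pos D 0; lia.
  rewrite !sat_Part //; upd; rewrite ?SD //= => -[RR HR] [RS HS] ZR.
  rewrite sat_Next //; upd; split => //.
  move: HR HS; rewrite !Hx => HR HS.
  have E : pt (e n) 0 - (size D).-1 = (pt (e n) 0 - size D).+1.
    case: (ltnP (size D).-1 (pt (e n) 0)) => H1; first lia.
    by exfalso; apply: ZR; rewrite -HR; have -> : pt (e n) 0 - (size D).-1 = 0 by lia.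
  by rewrite -HR -HS E np_succ.
Qed.



Definition Pd (t : seq nat) j := \prod_(x <- drop j t) nth_prime x.

Lemma nth_prime_gt0 k : 0 < nth_prime k.
Proof. case: k => // k; apply: prime_gt0; exact: nth_prime_prime. Qed.

Lemma Pd_pos t j : 0 < Pd t j.
Proof. apply: prodn_gt0 => i; exact: nth_prime_gt0. Qed.

Lemma Pd_step t j : j < size t -> Pd t j = nth_prime (nth 0 t j) * Pd t j.+1.
Proof. by move=> Hj; rewrite /Pd (drop_nth 0 Hj) big_cons. Qed.

Lemma Pd_end t : Pd t (size t) = 1.
Proof. by rewrite /Pd drop_size big_nil. Qed.

Lemma np_nth k : 0 < k -> np k = nth_prime k.
Proof. by rewrite /np; case: k. Qed.

Lemma PdW (t : ipartition) : exists x : ipartition, forall i, pt x i = if i < size t then Pd t i else 0.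
Proof.
apply: (@mkP (fun i => if i < size t then Pd t i else 0) (size t)) => i.
- by move=> ->; apply: Pd_pos.
- by rewrite ltnNge => ->.
- case: (ltnP i.+1 (size t)) => Hi //.
  rewrite ifT; last lia.
  rewrite (Pd_step (j := i)); last lia.
  have := nth_prime_gt0 (nth 0 t i); nia.
Qed.

Definition fProd t w m := locked
  (FExists m (FExists m.+1 (FAnd (fLen m m.+1 m.+2) (FAnd (fLen t m.+1 m.+2)
   (FAnd (FImp (fZero t m.+2) (FAnd (fCol w m.+2) (FAnd (FNot (fZero w m.+2)) (fRow w))))
   (FAnd (FImp (FNot (fZero t m.+2)) (fFirst m w m.+2))
   (FForall m.+2 (FForall m.+3 (FForall m.+4 (FForall m.+5 (FForall m.+6 (FForall m.+7
     (FImp (fSuccC m.+2 m.+3 m.+8) (FImp (FNot (fZero m.+2 m.+8)) (FImp (fPart t m.+2 m.+6 m.+8)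
      (FImp (fPart m m.+2 m.+4 m.+8) (FImp (fPart m m.+3 m.+5 m.+8) (FImp (FNot (fZero m.+6 m.+8))
      (FImp (fNth m.+6 m.+7 m.+8)
        (FAnd (FImp (fZero m.+5 m.+8) (FAnd (fle m.+4 m.+7) (fle m.+7 m.+4)))
              (FImp (FNot (fZero m.+5 m.+8)) (fMul m.+7 m.+5 m.+4 m.+8)))))))))))))))))))))).

Lemma sat_Prod (e : env) t w m : t < m -> w < m ->
  sat e (fProd t w m) <-> pt (e w) 1 = 0 /\ pt (e w) 0 = \prod_(x <- e t) nth_prime x.
Proof.
move=> Ht Hw; rewrite /fProd -lock /=; split.
- move=> [W [C]]; rewrite !sat_Len // !sat_Zero // sat_Col // sat_Row sat_First //; upd.
  move=> [[CC SCW] [[_ SCt] [Hz [Hnz H]]]].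
  case: (posnP (pt (e t) 0)) => Zt.
  + have [C1 [Z1 R1]] := Hz Zt.
    have St : size (e t) = 0 by have := pt_pos (e t) 0; lia.
    rewrite (size0nil St) big_nil; split => //; lia.
  + have [Rw Hf] := Hnz ltac:(lia). split => //; rewrite Hf.
    have Hst : 0 < size (e t) by rewrite -pt_pos.
    have Hrel : forall j, j < size (e t) ->
        pt W j = nth_prime (pt (e t) j) * (if j.+1 < size (e t) then pt W j.+1 else 1).
      move=> j Hj.
      have [D HD] := colW j.+1. have [D' HD'] := colW j.+2.
      have [R HR] := rowW (pt W j). have [S HS] := rowW (pt W j.+1).
      have [T HT] := rowW (pt (e t) j). have [Q HQ] := rowW (nth_prime (pt (e t) j)).
      have SD : size D = j.+1 by apply: size_of => i; rewrite HD; lia.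
      have SD' : size D' = j.+2 by apply: size_of => i; rewrite HD'; lia.
      have Tp : 0 < pt (e t) j by rewrite pt_pos.
      have := H D D' R S T Q; rewrite sat_SuccC // !sat_Zero // !sat_Part //; upd; rewrite ?SD ?SD' //.
      rewrite sat_Nth // !sat_le sat_Mul //; upd; rewrite !HD !HD' !HR !HS !HT !HQ /=.
      have Tn : pt (e t) j <> 0 by lia.
      move=> /(_ (And3 isT isT erefl) ltac:(done) (conj erefl erefl) (conj erefl erefl)
        (conj erefl erefl) Tn (And3 erefl erefl (esym (np_nth Tp)))) [A B].
      case: (ltnP j.+1 (size (e t))) => Hj1.
      * have Sp : 0 < pt W j.+1 by rewrite pt_pos -SCW SCt.
        have [_ _ _ _ ->] := B ltac:(lia). lia.
      * have S0 : pt W j.+1 = 0 by apply/eqP; rewrite -leqn0 leqNgt pt_pos -SCW SCt; lia.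
        have [A1 A2] := A S0. have := A1 0; have := A2 0; rewrite !HR !HQ /=. lia.
    have Hk : forall k, k <= size (e t) ->
        (if size (e t) - k < size (e t) then pt W (size (e t) - k) else 1) = Pd (e t) (size (e t) - k).
      elim=> [|k IH] Hk; first by rewrite subn0 ltnn Pd_end.
      have Hj : size (e t) - k.+1 < size (e t) by lia.
      rewrite Hj (Hrel _ Hj) (Pd_step Hj); have -> : (size (e t) - k.+1).+1 = size (e t) - k by lia.
      by rewrite IH //; lia.
    have := Hk (size (e t)) (leqnn _); rewrite subnn Hst => ->.
    by rewrite /Pd drop0.
- move=> [Rw Hs].
  have [W HW] := PdW (e t). have [C HC] := colW (size (e t)).
  have SC : size C = size (e t) by apply: size_of => i; rewrite HC; lia.
  have SW : size W = size (e t).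
    by apply: size_of => i; rewrite HW; case: ifP => // _; rewrite Pd_pos.
  exists W, C; rewrite !sat_Len // !sat_Zero // sat_Col // sat_Row sat_First //; upd.
  have CC : pt C 0 <= 1 by rewrite HC; lia.
  split; first by rewrite SC SW.
  split; first by rewrite SC.
  split.
    move=> Zt; have St : size (e t) = 0 by have := pt_pos (e t) 0; lia.
    move: Hs; rewrite (size0nil St) big_nil => ->; split => //.
  split.
    move=> Zt; split => //; rewrite HW Hs; have -> : 0 < size (e t) by rewrite -pt_pos; lia.
    by rewrite /Pd drop0.
  move=> D D' R S T Q; rewrite sat_SuccC // !sat_Zero //; upd => -[CD CD' SD] ZD.
  have PD : 0 < size D by have := pt_pos D 0; lia.
  rewrite !sat_Part //; upd; rewrite ?SD //= => -[RT HT] [RR HR] [RS HS] ZT.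
  rewrite sat_Nth //; upd => -[_ RQ HQ].
  rewrite !sat_le sat_Mul //; upd.
  have Hj : (size D).-1 < size (e t) by rewrite -pt_pos; lia.
  move: HR HS; rewrite !HW Hj => HR HS.
  rewrite np_nth in HQ; last lia.
  split.
  + move=> S0; move: HS; rewrite S0; case: ifP => HH; first by have := Pd_pos (e t) (size D); lia.
    move=> _; have E : size D = size (e t) by lia.
    move: HR; rewrite (Pd_step Hj) -/(pt (e t) ((size D).-1)) HT.
    have -> : (size D).-1.+1 = size (e t) by lia.
    rewrite Pd_end muln1 -HQ => HR.
    by rewrite (le_row _ RR) (le_row _ RQ) HR; split.
  + move=> S0; move: HS; case: ifP => HH; last lia.
    move=> HS; split => //.
    * by rewrite HQ; apply: nth_prime_gt0.
    * move: HR; rewrite (Pd_step Hj) -/(pt (e t) ((size D).-1)) HT -HQ -HS.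
      have -> : (size D).-1.+1 = size D by lia.
      by [].
Qed.



Lemma mem_col (x : ipartition) y : pt x 0 <= 1 -> y \in parts x -> y = 1.
Proof.
move=> H /(nthP 0) [i Hi <-]; have := @pt_col x i H; rewrite /pt Hi => ->; done.
Qed.

Lemma prod_col (x : ipartition) : pt x 0 <= 1 -> \prod_(y <- parts x) nth_prime y = 2 ^ size x.
Proof.
move=> H; rewrite (eq_big_seq (fun _ => 2)); last by move=> y /(mem_col H) ->; have [_ E] := np_small; exact: E.
by rewrite big_const_seq count_predT iter_muln_1.
Qed.

Lemma single_iff (x : ipartition) v : 0 < v -> (parts x = single v <-> pt x 1 = 0 /\ pt x 0 = v).
Proof.
move=> Hv; have -> : single v = [:: v] by case: v Hv.
split; first by rewrite /pt => ->.
move=> [H1 H0]; have Hs : size x = 1.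
  apply: size_of => i; case: i => [|[|i]] /=; rewrite ?H0 //; first by rewrite pt_row.
  by rewrite pt_row.
move: H0; rewrite /pt; case: (parts x) Hs => [|a [|b l]] //= _ ->; done.
Qed.

Lemma nil_iff (x : ipartition) : parts x = [::] <-> pt x 0 = 0.
Proof.
split; first by rewrite /pt => ->.
move=> H; apply: size0nil; have := pt_pos x 0; lia.
Qed.

Definition Psi := FOr (FAnd (fZero 0 2) (fZero 1 2))
 (FOr (FAnd (fCol 0 2) (FAnd (FNot (fZero 0 2)) (FExists 2 (FAnd (fle 2 0) (FAnd (FNot (fle 0 2))
     (FAnd (FForall 3 (FImp (fle 3 0) (FImp (FNot (fle 0 3)) (fle 3 2)))) (fProd 2 1 3)))))))
      (FAnd (FNot (fCol 0 2)) (fProd 0 1 2))).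

Lemma sat_Psi (e : env) : sat e Psi <->
  [\/ pt (e 0) 0 = 0 /\ pt (e 1) 0 = 0,
      pt (e 0) 0 = 1 /\ (pt (e 1) 1 = 0 /\ pt (e 1) 0 = 2 ^ (size (e 0)).-1)
    | 1 < pt (e 0) 0 /\ (pt (e 1) 1 = 0 /\ pt (e 1) 0 = \prod_(x <- e 0) nth_prime x)].
Proof.
rewrite /Psi /= !sat_Zero // !sat_Col // sat_Prod //.
have Hmid : pt (e 0) 0 = 1 ->
  ((exists a, sat (update e 2 a) (fle 2 0) /\ ~ sat (update e 2 a) (fle 0 2) /\
     (forall a0, sat (update (update e 2 a) 3 a0) (fle 3 0) -> ~ sat (update (update e 2 a) 3 a0) (fle 0 3) ->
        sat (update (update e 2 a) 3 a0) (fle 3 2)) /\ sat (update e 2 a) (fProd 2 1 3))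
   <-> (pt (e 1) 1 = 0 /\ pt (e 1) 0 = 2 ^ (size (e 0)).-1)).
  move=> H1.
  have C0 : pt (e 0) 0 <= 1 by lia.
  have S0 : 0 < size (e 0) by rewrite -pt_pos; lia.
  split.
  - move=> [t]; rewrite !sat_le sat_Prod //; upd => -[Hle [Hnle [Hmax Hp]]].
    have [Ct St] := le_col2 C0 Hle.
    have Hlt : size t < size (e 0).
      case: (ltnP (size t) (size (e 0))) => // Hge; exfalso; apply: Hnle; apply/le_col => //; lia.
    have [y Hy] := colW (size (e 0)).-1.
    have Cy : pt y 0 <= 1 by rewrite Hy; lia.
    have Sy : size y = (size (e 0)).-1 by apply: size_of => i; rewrite Hy; lia.
    have := Hmax y; rewrite !sat_le; upd; rewrite !(le_col _ Cy) (le_col _ C0) Sy => H'.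
    have Hst : size t = (size (e 0)).-1.
      have := H' ltac:(lia) ltac:(lia); lia.
    by rewrite -Hst -prod_col.
  - move=> [R1 Hv].
    have [t Ht] := colW (size (e 0)).-1.
    have Ct : pt t 0 <= 1 by rewrite Ht; lia.
    have St : size t = (size (e 0)).-1 by apply: size_of => i; rewrite Ht; lia.
    exists t; rewrite !sat_le sat_Prod //; upd.
    rewrite (le_col _ Ct) (le_col _ C0) St prod_col // St; split; first lia.
    split; first lia.
    split => // y; rewrite !sat_le; upd => Hy; have [Cy _] := le_col2 C0 Hy.
    rewrite !(le_col _ Cy) (le_col _ C0) => Hn; lia.
split.
- move=> [[A B]|[[A [B Hx]]|[A B]]].
  + by constructor 1.
  + constructor 2; split; first lia. by apply/Hmid => //; lia.
  + constructor 3; split => //; lia.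
- move=> [[A B]|[A B]|[A B]].
  + by left.
  + right; left; split; first lia. split; first lia. by apply/Hmid.
  + right; right; split => //; lia.
Qed.

Theorem proposition4p3 :
  exists Psi : formula,
    forall (sigma pi : ipartition) (e : env),
      e 0 = sigma -> e 1 = pi ->
      (sat e Psi <-> (pi : seq nat) = single (hash sigma)).
Proof.
exists Psi => sigma pi e H0 H1; rewrite sat_Psi H0 H1.
case: (ltngtP (pt sigma 0) 1) => Hs.
- have Hs0 : pt sigma 0 = 0 by lia.
  have -> : parts sigma = [::] by apply/nil_iff.
  rewrite /= nil_iff; split; first by case => [[]|[]|[]] //; lia.
  by move=> ->; constructor 1.
- have Hh : hash sigma = \prod_(x <- sigma) nth_prime x.
    rewrite /hash; case E: (parts sigma) => [|a l]; first by move: Hs; rewrite /pt E.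
    rewrite -E; case: ifP => // /allP Hall.
    have Hm : pt sigma 0 \in parts sigma by rewrite /pt E /= inE eqxx.
    by have := Hall _ Hm; move/eqP; lia.
  rewrite Hh single_iff; last by apply: prodn_gt0 => i; apply: nth_prime_gt0.
  split; first by case => [[]|[]|[]] //; lia.
  by move=> H; constructor 3.
- have Hh : hash sigma = 2 ^ (size sigma).-1.
    rewrite /hash; case E: (parts sigma) => [|a l]; first by move: Hs; rewrite /pt E.
    rewrite -E; case: ifP => // /negP Hn; exfalso; apply: Hn; apply/allP => y Hy.
    by have := @mem_col sigma y; rewrite Hs => /(_ isT Hy) ->.
  rewrite Hh single_iff; last by rewrite expn_gt0.
  split; first by case => [[]|[]|[]] //; lia.
  by move=> H; constructor 2.
Qed.
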